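(* Let $G=(V,E)$ be a finite connected graph, let $\varepsilon>0$ and $\rho\ge1$. There exist a vertex $v_0\in V$ and positive real numbers $(\omega_v)_{v\in V}$ such that: for every $v\in V\setminus\{v_0\}$ there is a neighbour $u$ of $v$ with $\omega_v\le\varepsilon\,\omega_u^\rho$; $\omega_{v_0}>1/2$; and $\sum_{v\in V}\omega_v=1$.
   Context: Two vertices $u,v$ are neighbours if $uv$ is an edge; a graph is connected if any two vertices are joined by a path of edges. *)

(* Defs.v *)
From HB Require Import structures.
From mathcomp Require Import all_boot all_order all_algebra.
From mathcomp Require Import all_classical all_reals all_analysis.
Set Implicit Arguments. Unset Strict Implicit. Unset Printing Implicit Defensive.

Definition simple_graph (T : finType) (e : rel T) : Prop :=
  symmetric e /\ irreflexive e.

Definition graph_connected (T : finType) (e : rel T) : Prop :=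
  forall x y : T, connect e x y.

(* Main.v *)
Require Import Defs.
From HB Require Import structures.
From mathcomp Require Import all_boot all_order all_algebra.
From mathcomp Require Import all_classical all_reals all_analysis.
From mathcomp Require Import ring lra.
Import Order.TTheory GRing.Theory Num.Theory.
Local Open Scope ring_scope.

Section Aux.
Variables (R : realType) (eps rho delta : R).
Hypotheses (Heps : 0 < eps) (Hdelta : 0 < delta).

Fixpoint aseq (k : nat) : R :=
  match k with
  | 0 => 1 / 2
  | k'.+1 => Num.min (Num.min (eps * aseq k' `^ rho) (aseq k')) delta
  end.

Lemma aseq_pos k : 0 < aseq k.
Proof.
elim: k => [|k IH] /=; first by [].
rewrite !lt_min Hdelta IH andbT /=.
by rewrite mulr_gt0 // powR_gt0.
Qed.

Lemma aseq_step k : aseq k.+1 <= eps * aseq k `^ rho.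
Proof. by rewrite /= !ge_min lexx. Qed.

Lemma aseq_delta k : (0 < k)%N -> aseq k <= delta.
Proof. by case: k => // k _; rewrite /= ge_min lexx orbT. Qed.

Lemma aseq_dec k m : (k <= m)%N -> aseq m <= aseq k.
Proof.
elim: m => [|m IH]; first by rewrite leqn0 => /eqP ->.
rewrite leq_eqVlt => /predU1P[-> //|Hk].
apply: le_trans (IH Hk).
by rewrite /= !ge_min lexx orbT.
Qed.
End Aux.

Theorem lemma2p9 (R : realType) (T : finType) (e : rel T)
  (Hsimple : simple_graph e) (Hconn : graph_connected e)
  (Hne : (0 < #|T|)%N) (eps rho : R) (Heps : 0 < eps) (Hrho : 1 <= rho) :
  exists (v0 : T) (omega : T -> R),
    (forall v, 0 < omega v) /\
    (forall v, v != v0 -> exists2 u, e v u & omega v <= eps * omega u `^ rho) /\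
    1 / 2 < omega v0 /\
    \sum_(v : T) omega v = 1.
Proof.
have [v0 _] := card_gt0P Hne.
pose P (v : T) (n : nat) := [exists p : n.-tuple T, path e v p && (last v p == v0)].
have exP : forall v, exists n, P v n.
  move=> v; have /connectP [p Hp Hl] := Hconn v v0.
  exists (size p); apply/existsP; exists (in_tuple p) => /=.
  by rewrite Hp -Hl eqxx.
pose d v := ex_minn (exP v).
have Hd : forall v, v != v0 -> exists2 u, e v u & (d u < d v)%N.
  move=> v Hv; rewrite /d.
  case: (ex_minnP (exP v)) => n /existsP [p /andP [Hp Hl]] _.
  case: p Hp Hl => [[|u p'] Hs] /= Hp Hl.
    by move: Hv; rewrite -(eqP Hl) eqxx.
  move/andP: Hp => [Hvu Hp'].
  exists u => //.
  case: (ex_minnP (exP u)) => m _ Hmin.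
  have : P u (size p') by apply/existsP; exists (in_tuple p'); rewrite /= Hp' Hl.
  move/Hmin => Hm; rewrite -(eqP Hs) /=.
  by apply: leq_ltn_trans Hm _.
have Hd0 : forall v, v != v0 -> (0 < d v)%N.
  by move=> v /Hd [u _ Hu]; apply: leq_ltn_trans Hu.
pose delta : R := (4 * #|T|%:R)^-1.
have Hn : 0 < (#|T|%:R : R) by rewrite ltr0n.
have Hdelta : 0 < delta by rewrite invr_gt0 mulr_gt0.
pose a := @aseq R eps rho delta.
pose S := \sum_(v | v != v0) a (d v).
have HS : S <= 1 / 4.
  apply: (@le_trans _ _ (\sum_(v : T) delta)).
    apply: (@le_trans _ _ (\sum_(v | v != v0) delta)).
      by apply: ler_sum => v Hv; apply: aseq_delta; apply: Hd0.
    rewrite [X in _ <= X](bigD1 v0) //= lerDr; exact: ltW.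
  rewrite sumr_const -mulr_natr /delta.
  rewrite le_eqVlt; apply/orP; left; apply/eqP; field; exact: lt0r_neq0.
pose omega v := if v == v0 then 1 - S else a (d v).
have Hw0 : 1 / 2 < omega v0.
  rewrite /omega eqxx.
  have : 0 <= S by apply: sumr_ge0 => v _; apply/ltW/aseq_pos.
  move: HS; lra.
exists v0, omega; split.
  move=> v; rewrite /omega; case: ifP => _; last exact: aseq_pos.
  move: Hw0; rewrite /omega eqxx; apply: lt_trans; lra.
split.
  move=> v Hv; have [u Heu Hu] := Hd v Hv.
  exists u => //; rewrite /omega (negbTE Hv).
  have Hst : a (d v) <= eps * a (d u) `^ rho.
    apply: le_trans (aseq_step _ _ _ _ _); exact: aseq_dec.
  case: ifP => Hu0; last exact: Hst.
  apply: (le_trans Hst); rewrite ler_pM2l //.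
  apply: ge0_ler_powR; first by apply: le_trans Hrho.
  - by rewrite nnegrE; apply/ltW/aseq_pos.
  - by rewrite nnegrE; move: Hw0; rewrite /omega eqxx; lra.
  rewrite (eqP Hu0) /d.
  case: (ex_minnP (exP v0)) => m _ Hmin.
  have : P v0 0 by apply/existsP; exists [tuple]; rewrite /= eqxx.
  by move/Hmin; rewrite leqn0 => /eqP -> /=; move: Hw0; rewrite /omega eqxx; lra.
split=> //.
rewrite (bigD1 v0) //= /omega eqxx.
rewrite (eq_bigr (fun v => a (d v))); last by move=> v /negbTE ->.
rewrite -/S; lra.
Qed.
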